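(* Let $p$ be a ProbNetKAT program, $S=\mathcal{S}[\![p]\!]$ and $U$ as in the context. For all $a,b,b'\subseteq\mathsf{Pk}$, \[ \lim_{n\to\infty}\sum_{a'\subseteq\mathsf{Pk}} (S^n)_{(a,b),(a',b')} = (SU)^\infty_{(a,b),(\emptyset,b')}, \] where $(SU)^\infty:=\lim_{n\to\infty}(SU)^n$. In particular the limit on the left exists, and it can be computed exactly in closed form: writing $SU=\begin{bmatrix} I & 0\\ R & Q\end{bmatrix}$ with the absorbing states $(\emptyset,c)$ listed first, $(SU)^\infty=\begin{bmatrix} I & 0\\ (I-Q)^{-1}R & 0\end{bmatrix}$, a matrix with rational entries.
   Context: $\mathsf{Pk}$ is a finite set of packets; $[\varphi]$ is the Iverson bracket. For a ProbNetKAT program $p$ (with rational choice probabilities), $\mathcal{B}[\![p]\!]\in[0,1]^{2^{\mathsf{Pk}}\times 2^{\mathsf{Pk}}}$ is its stochastic matrix semantics ($\mathcal{B}[\![p]\!]_{ab}$ = probability of output set $b$ on input set $a$). The small-step matrix on states $(a,b)\in 2^{\mathsf{Pk}}\times 2^{\mathsf{Pk}}$ is $S_{(a,b),(a',b')}=[b'=b\cup a]\,\mathcal{B}[\![p]\!]_{a,a'}$. A state $(a,b)$ is saturated if whenever $(S^n)_{(a,b),(a',b')}>0$ for some $n\ge0$ we have $b'=b$. $U_{(a,b),(a',b')}=[b'=b][a'=\emptyset]$ if $(a,b)$ is saturated, and $[b'=b][a'=a]$ otherwise. In the block decomposition, $R$ gives transition probabilities from the non-absorbing (transient) states to the absorbing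 states and $Q$ those between transient states. *)

(* Defs.v *)
From HB Require Import structures.
From mathcomp Require Import all_boot all_order all_algebra.
From mathcomp Require Import all_classical all_reals all_analysis.
Set Implicit Arguments. Unset Strict Implicit. Unset Printing Implicit Defensive.
Import Order.TTheory GRing.Theory Num.Theory.
Import numFieldNormedType.Exports.
Local Open Scope ring_scope.
Local Open Scope classical_set_scope.

Section FMx.
Variables (T : finType) (R : pzRingType).
Definition fmx := T -> T -> R.
Definition fid : fmx := fun i j => (i == j)%:R.
Definition fmul (A B : fmx) : fmx := fun i j => \sum_(k : T) A i k * B k j.
Definition fpow (A : fmx) (n : nat) : fmx := iter n (fmul A) fid.
End FMx.

Definition state (Pk : finType) := ({set Pk} * {set Pk})%type.

Section Chain.
Variables (Pk : finType) (R : realType).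
Variable B : {set Pk} -> {set Pk} -> R. (* big-step matrix B[[p]] *)

Definition smallstep : fmx (state Pk) R :=
  fun s t => (t.2 == s.2 :|: s.1)%:R * B s.1 t.1.

Definition saturated (s : state Pk) : Prop :=
  forall (n : nat) (t : state Pk), 0 < fpow smallstep n s t -> t.2 = s.2.

Definition Umx : fmx (state Pk) R :=
  fun s t => if `[< saturated s >]
             then ((t.2 == s.2) && (t.1 == finset.set0))%:R
             else ((t.2 == s.2) && (t.1 == s.1))%:R.

(* absorbing states of SU are the (∅,c) *)
Definition absorbing (s : state Pk) : bool := s.1 == finset.set0.

Definition SUinf : fmx (state Pk) R :=
  fun s t => lim ((fun n : nat => (fpow (fmul smallstep Umx) n s t : R)) @ \oo).
End Chain.

(* Main.v *)
Require Import Defs.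
From HB Require Import structures.
From mathcomp Require Import all_boot all_order all_algebra.
From mathcomp Require Import all_classical all_reals all_analysis.
Import Order.TTheory GRing.Theory Num.Theory.
Import numFieldNormedType.Exports.
Local Open Scope ring_scope.
Local Open Scope classical_set_scope.
Set Implicit Arguments. Unset Strict Implicit. Unset Printing Implicit Defensive.

Section Gen.
Variable (R : realType).

Lemma sum_delta_l (T : finType) (s : T) (f : T -> R) :
  \sum_t (s == t)%:R * f t = f s.
Proof.
rewrite (bigD1 s) //= eqxx mul1r big1 ?addr0 // => t Ht.
by rewrite eq_sym (negbTE Ht) mul0r.
Qed.

Lemma sum_delta_r (T : finType) (s : T) (f : T -> R) :
  \sum_t f t * (t == s)%:R = f s.
Proof.
rewrite (bigD1 s) //= eqxx mulr1 big1 ?addr0 // => t Ht.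
by rewrite (negbTE Ht) mulr0.
Qed.

Lemma fmul_val (T : finType) (A C : fmx T R) i j : fmul A C i j = \sum_k A i k * C k j.
Proof. by []. Qed.

Lemma fpowS (T : finType) (A : fmx T R) n : fpow A n.+1 = fmul A (fpow A n).
Proof. by []. Qed.

Lemma fmul1 (T : finType) (A : fmx T R) : fmul A (@fid T R) = A.
Proof. by apply/funext => i; apply/funext => j; rewrite /fmul /fid sum_delta_r. Qed.

Lemma fpow_ge0 (T : finType) (A : fmx T R) : (forall i j, 0 <= A i j) ->
  forall n i j, 0 <= fpow A n i j.
Proof.
move=> HA; elim=> [|n IH] i j; first by rewrite /= /fid ler0n.
by rewrite fpowS /fmul sumr_ge0 // => k _; rewrite mulr_ge0.
Qed.

Lemma fpow_sum1 (T : finType) (A : fmx T R) : (forall i j, 0 <= A i j) ->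
  (forall i, \sum_j A i j = 1) -> forall n i, \sum_j fpow A n i j = 1.
Proof.
move=> HA H1; elim=> [|n IH] i.
  rewrite /= /fid -[RHS](sum_delta_l i (fun=> 1)).
  by apply: eq_bigr => j _; rewrite mulr1.
rewrite fpowS /fmul exchange_big /= -(H1 i); apply: eq_bigr => k _.
by rewrite -mulr_sumr IH mulr1.
Qed.

Lemma reach_step (T : finType) (A : fmx T R) : (forall i j, 0 <= A i j) ->
  forall n s u t, A s u * fpow A n u t <= fpow A n.+1 s t.
Proof.
move=> HA n s u t; rewrite fpowS /fmul (bigD1 u) //= lerDl sumr_ge0 // => k _.
by rewrite mulr_ge0 // fpow_ge0.
Qed.

Lemma sum_pos (T : finType) (F : T -> R) : (forall k, 0 <= F k) ->
  0 < \sum_k F k -> exists k, 0 < F k.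
Proof.
move=> H0 Hs; case: (pickP (fun k => 0 < F k)) => [k Hk|H]; first by exists k.
move: Hs; rewrite big1 ?ltxx // => k _.
by apply/le_anti; rewrite H0 andbT leNgt H.
Qed.

Lemma mul_pos (x y : R) : 0 <= x -> 0 <= y -> 0 < x * y -> 0 < x /\ 0 < y.
Proof.
rewrite !le_eqVlt => /orP[/eqP <-|hx]; first by rewrite mul0r ltxx.
move=> /orP[/eqP <-|hy]; first by rewrite mulr0 ltxx.
by [].
Qed.

Lemma cvg_fsum (T : finType) (f : T -> nat -> R) (l : T -> R) :
  (forall i, (f i) @ \oo --> l i) ->
  (fun n => \sum_i f i n) @ \oo --> \sum_i l i.
Proof.
move=> H; rewrite /index_enum; elim: (Finite.enum T) => [|x r IH].
  have -> : (fun n => \sum_(i <- [::]) f i n) = (fun=> 0) by apply/funext=> n; rewrite big_nil.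
  by rewrite big_nil; exact: cvg_cst.
have -> : (fun n => \sum_(i <- x :: r) f i n) = (f x) + (fun n => \sum_(i <- r) f i n).
  by apply/funext=> n; rewrite big_cons.
by rewrite big_cons; apply: cvgD => //; exact: H.
Qed.

End Gen.

Section Chain2.
Variables (Pk : finType) (R : realType) (B : {set Pk} -> {set Pk} -> R).
Hypothesis B_ge0 : forall a a', 0 <= B a a'.
Hypothesis B_stoch : forall a, \sum_(a' : {set Pk}) B a a' = 1.
Hypothesis B_empty : B finset.set0 finset.set0 = 1.

Local Notation st := (state Pk).
Local Notation S := (smallstep B).
Local Notation U := (Umx B).
Local Notation SU := (fmul (smallstep B) (Umx B)).

Definition pi (k : st) : st := if `[< saturated B k >] then (finset.set0, k.2) else k.

Lemma Uval k t : U k t = (t == pi k)%:R.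
Proof.
rewrite /Umx /pi; case: ifP => _; case: t => [t1 t2]; case: k => [k1 k2] /=;
  by rewrite xpair_eqE andbC.
Qed.

Lemma U_ge0 k t : 0 <= U k t.
Proof. by rewrite Uval ler0n. Qed.

Lemma B0 a' : a' != finset.set0 -> B finset.set0 a' = 0.
Proof.
move=> Ha; have := B_stoch finset.set0; rewrite (bigD1 finset.set0) //= B_empty.
move=> /eqP; rewrite -subr_eq0 addrAC subrr add0r => /eqP H.
by apply: (psumr_eq0P _ H) => // i _.
Qed.

Lemma S_ge0 s t : 0 <= S s t.
Proof. by rewrite /smallstep mulr_ge0 // ler0n. Qed.

Lemma S_sum1 s : \sum_t S s t = 1.
Proof.
rewrite /smallstep -[RHS](B_stoch s.1).
have -> : \sum_a B s.1 a = \sum_a \sum_c (((c == s.2 :|: s.1)%:R * B s.1 a) : R).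
  apply: eq_bigr => a _.
  by rewrite (bigD1 (s.2 :|: s.1)) //= eqxx mul1r big1 ?addr0 // => c /negbTE ->; rewrite mul0r.
rewrite pair_big /=; apply: eq_big => // -[a c] _ //.
Qed.

Lemma SU_ge0 s t : 0 <= SU s t.
Proof. by rewrite /fmul sumr_ge0 // => k _; rewrite mulr_ge0 ?S_ge0 ?U_ge0. Qed.

Lemma U_sum1 k : \sum_t U k t = 1.
Proof.
under eq_bigr do rewrite Uval.
by rewrite -[RHS](sum_delta_r (pi k) (fun=> 1)); apply: eq_bigr => t _; rewrite mul1r.
Qed.

Lemma SU_sum1 s : \sum_t SU s t = 1.
Proof.
rewrite /fmul exchange_big /= -(S_sum1 s); apply: eq_bigr => k _.
by rewrite -mulr_sumr U_sum1 mulr1.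
Qed.

Lemma SU_val s t : SU s t = \sum_k S s k * (t == pi k)%:R.
Proof. by apply: eq_bigr => k _; rewrite Uval. Qed.

Lemma S_pos_2 s u : 0 < S s u -> u.2 = s.2 :|: s.1.
Proof.
rewrite /smallstep; case: eqP => // _; by rewrite mul0r ltxx.
Qed.

Lemma sat_succ s u : saturated B s -> 0 < S s u -> saturated B u /\ u.2 = s.2.
Proof.
move=> Hs Hp; have H2 : u.2 = s.2.
  by apply: (Hs 1%N); rewrite fpowS fmul1.
split => // n t Ht; rewrite H2; apply: (Hs n.+1).
apply: (lt_le_trans _ (reach_step S_ge0 n s u t)).
by rewrite mulr_gt0.
Qed.

Lemma S0 c t : S (finset.set0, c) t = (t == (finset.set0, c))%:R.
Proof.
rewrite /smallstep /= finset.setU0; case: t => [a c'] /=; rewrite xpair_eqE.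
case: (eqVneq a finset.set0) => [->|Ha]; first by rewrite B_empty mulr1 /=; case: eqP.
by rewrite B0 // mulr0.
Qed.

Lemma fpowS0 c n t : fpow S n (finset.set0, c) t = (t == (finset.set0, c))%:R.
Proof.
elim: n t => [|n IH] t; first by rewrite /= /fid eq_sym.
rewrite fpowS /fmul.
under eq_bigr do rewrite S0.
rewrite (bigD1 (finset.set0, c)) //= eqxx mul1r IH big1 ?addr0 // => k /negbTE ->.
by rewrite mul0r.
Qed.

Lemma sat0 c : saturated B (finset.set0, c).
Proof.
move=> n t; rewrite fpowS0 ltr0n; case: eqP => // -> _ //.
Qed.

Lemma SU_sat j k : saturated B j -> SU j k = (k == (finset.set0, j.2))%:R.
Proof.
move=> Hj; rewrite SU_val.
transitivity (\sum_i S j i * (k == (finset.set0, j.2))%:R).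
  apply: eq_bigr => i _.
  have [Hp|Hn] := ltP 0 (S j i).
    have [Hi H2] := sat_succ Hj Hp.
    by rewrite /pi asboolT // H2.
  have -> : S j i = 0 by apply/le_anti; rewrite Hn S_ge0.
  by rewrite !mul0r.
by rewrite -mulr_suml S_sum1 mul1r.
Qed.

Lemma abs_eq (s : st) : absorbing s -> s = (finset.set0, s.2).
Proof. by case: s => a c; rewrite /absorbing /= => /eqP ->. Qed.

Lemma SU_abs (s t : st) : absorbing s -> SU s t = (s == t)%:R.
Proof.
move=> Hs; rewrite {1}(abs_eq Hs) SU_sat; last exact: sat0.
by rewrite /= -(abs_eq Hs) eq_sym.
Qed.

Lemma fpowSU_abs n (s t : st) : absorbing s -> fpow SU n s t = (s == t)%:R.
Proof.
move=> Hs; elim: n t => [|n IH] t; first by [].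
rewrite fpowS; transitivity (\sum_k (s == k)%:R * fpow SU n k t).
  by apply: eq_bigr => k _; rewrite SU_abs.
by rewrite sum_delta_l IH.
Qed.

Lemma pi_nonsat k : ~ saturated B k -> pi k = k.
Proof. by move=> H; rewrite /pi asboolF. Qed.

Lemma SU_ge_S s u : ~ saturated B u -> S s u <= SU s u.
Proof.
move=> Hu; rewrite SU_val (bigD1 u) //= pi_nonsat // eqxx mulr1 lerDl.
by rewrite sumr_ge0 // => k _; rewrite mulr_ge0 ?S_ge0 ?ler0n.
Qed.

Lemma SU_ge_S_sat s u : saturated B u -> S s u <= SU s (finset.set0, u.2).
Proof.
move=> Hu; rewrite SU_val (bigD1 u) //= /pi asboolT // eqxx mulr1 lerDl.
by rewrite sumr_ge0 // => k _; rewrite mulr_ge0 ?S_ge0 ?ler0n.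
Qed.


Definition Q (s t : st) : R := if ~~ absorbing s && ~~ absorbing t then SU s t else 0.

Lemma Q_ge0 s t : 0 <= Q s t.
Proof. by rewrite /Q; case: ifP => _; rewrite ?SU_ge0. Qed.

Lemma Q_le s t : Q s t <= SU s t.
Proof. by rewrite /Q; case: ifP => _; rewrite ?SU_ge0. Qed.

Lemma Q_sum_le s : \sum_t Q s t <= 1.
Proof. rewrite -(SU_sum1 s); apply: ler_sum => t _; exact: Q_le. Qed.

Definition r n s := \sum_t fpow Q n s t.

Lemma r_ge0 n s : 0 <= r n s.
Proof. by rewrite /r sumr_ge0 // => t _; apply: fpow_ge0; exact: Q_ge0. Qed.

Lemma rS n s : r n.+1 s = \sum_k Q s k * r n k.
Proof.
rewrite /r fpowS /fmul exchange_big /=; apply: eq_bigr => k _.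
by rewrite mulr_sumr.
Qed.

Lemma r0 s : r 0 s = 1.
Proof.
rewrite /r /= /fid -[RHS](sum_delta_l s (fun=> (1:R))).
by apply: eq_bigr => t _; rewrite mulr1.
Qed.

Lemma r_decr n s : r n.+1 s <= r n s.
Proof.
elim: n s => [|n IH] s.
  rewrite rS r0; under eq_bigr do rewrite r0 mulr1.
  exact: Q_sum_le.
rewrite (rS n.+1) (rS n); apply: ler_sum => k _.
by apply: ler_wpM2l; [exact: Q_ge0 | exact: IH].
Qed.

Definition rl s := inf (range (fun n => r n s)).

Lemma r_cvg s : (fun n => r n s) @ \oo --> rl s.
Proof.
apply: nonincreasing_cvgn.
  by apply/nonincreasing_seqP => n; exact: r_decr.
by exists 0 => _ [n _ <-]; exact: r_ge0.
Qed.

Lemma rl_ge0 s : 0 <= rl s.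
Proof.
rewrite -(cvg_lim (@Rhausdorff R) (@r_cvg s)).
apply: limr_ge; first by apply/cvg_ex; exists (rl s); exact: r_cvg.
by apply: nearW => n; exact: r_ge0.
Qed.

Lemma rl_eq s : rl s = \sum_k Q s k * rl k.
Proof.
have H1 : (fun n => r n.+1 s) @ \oo --> rl s.
  by have := @r_cvg s; rewrite -cvg_shiftS.
have H2 : (fun n => r n.+1 s) @ \oo --> \sum_k Q s k * rl k.
  under eq_fun do rewrite rS.
  apply: cvg_fsum => k; apply: cvgMr; exact: r_cvg.
exact: (cvg_unique _ H1 H2).
Qed.

Lemma rl_zero s : rl s = 0.
Proof.
have [x0 Hx0] : exists x0 : st, forall k, rl k <= rl x0.
  case: (@arg_maxP _ _ _ (finset.set0, finset.set0) xpredT rl isT) => x _ H.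
  by exists x => k; exact: H.
pose M := rl x0.
suff HM : M <= 0 by apply/le_anti; rewrite rl_ge0 andbT (le_trans (Hx0 s) HM).
rewrite leNgt; apply/negP => HM.
case: (@arg_maxnP _ x0 (fun i => rl i == M) (fun i : st => #|i.2|) (eqxx _)) => s0 /eqP Hs0 Hmax.
have fact : forall x, rl x = M ->
    [/\ (forall k, absorbing k -> SU x k = 0),
        (forall k, 0 < Q x k -> rl k = M) & ~~ absorbing x].
  move=> x Hx.
  have Htr : ~~ absorbing x.
    apply/negP => Ha; move: HM; rewrite -Hx rl_eq big1 ?ltxx // => k _.
    by rewrite /Q Ha mul0r.
  have Hsum : \sum_k Q x k = 1.
    apply/le_anti; rewrite Q_sum_le /=.
    have : M <= (\sum_k Q x k) * M.
      rewrite -{1}Hx rl_eq mulr_suml; apply: ler_sum => k _.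
      by rewrite ler_wpM2l ?Q_ge0 //; exact: Hx0.
    by rewrite -{1}(mul1r M) ler_pM2r.
  have HQSU : forall k, Q x k = SU x k.
    have H0 : \sum_k (SU x k - Q x k) = 0 by rewrite sumrB SU_sum1 Hsum subrr.
    have Hp : forall i, xpredT i -> 0 <= SU x i - Q x i.
      by move=> i _; rewrite subr_ge0 Q_le.
    move=> k; have := @psumr_eq0P _ _ _ _ Hp H0 k isT.
    by move/eqP; rewrite subr_eq0 => /eqP.
  split => //.
    by move=> k Hk; rewrite -HQSU /Q Hk andbF.
  move=> k Hk.
  have H0 : \sum_j Q x j * (M - rl j) = 0.
    under eq_bigr do rewrite mulrBr.
    by rewrite sumrB -mulr_suml Hsum mul1r -rl_eq Hx subrr.
  have Hp : forall j, xpredT j -> 0 <= Q x j * (M - rl j).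
    by move=> j _; rewrite mulr_ge0 ?Q_ge0 // subr_ge0; exact: Hx0.
  have := @psumr_eq0P _ _ _ _ Hp H0 k isT.
  by move/eqP; rewrite mulf_eq0 (gt_eqF Hk) /= subr_eq0 => /eqP <-.
have one_step : forall x u, rl x = M -> x.2 = s0.2 -> 0 < S x u ->
    [/\ rl u = M, u.2 = s0.2 & ~ saturated B u].
  move=> x u Hx H2 Hp; have [Habs Hpos Htr] := fact x Hx.
  have Hns : ~ saturated B u.
    move=> Hsu; have := SU_ge_S_sat x Hsu.
    rewrite Habs; last by rewrite /absorbing eqxx.
    by move=> Hle; move: Hp; rewrite ltNge Hle.
  have Hutr : ~~ absorbing u.
    by apply/negP => Hu; apply: Hns; rewrite (abs_eq Hu); exact: sat0.
  have HQ : 0 < Q x u.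
    by rewrite /Q Htr Hutr /= (lt_le_trans Hp (SU_ge_S x Hns)).
  have Hu := Hpos u HQ.
  split => //.
  have Hsub : x.2 \subset u.2 by rewrite (S_pos_2 Hp) finset.subsetUl.
  have Hcard : (#|u.2| <= #|x.2|)%N by rewrite H2; apply: Hmax; rewrite Hu.
  by have := eqEcard x.2 u.2; rewrite Hsub Hcard => /eqP <-.
have reach : forall n x t, rl x = M -> x.2 = s0.2 -> 0 < fpow S n x t ->
    rl t = M /\ t.2 = s0.2.
  elim=> [|n IH] x t Hx H2.
    by rewrite /= /fid ltr0n; case: eqP => // <- _.
  rewrite fpowS /fmul.
  move=> /(sum_pos (fun k => mulr_ge0 (S_ge0 _ _) (fpow_ge0 S_ge0 _ _ _))) [u Hu].
  have [H1 H3] := mul_pos (S_ge0 _ _) (fpow_ge0 S_ge0 _ _ _) Hu.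
  have [Hu1 Hu2 _] := one_step x u Hx H2 H1.
  exact: IH u t Hu1 Hu2 H3.
have Hsat : saturated B s0.
  by move=> n t Ht; have [_ ->] := reach n s0 t Hs0 erefl Ht.
have [u Hu] : exists u, 0 < S s0 u.
  by apply: sum_pos; [exact: S_ge0 | rewrite S_sum1 ltr01].
have [_ _ Hns] := one_step s0 u Hs0 erefl Hu.
by have [] := sat_succ Hsat Hu.
Qed.

Lemma Qpow_cvg0 s t : (fun n => fpow Q n s t) @ \oo --> 0.
Proof.
apply: (squeeze_cvgr (f := fun=> 0) (h := fun n => r n s)).
- apply: nearW => n; rewrite fpow_ge0 /=; last exact: Q_ge0.
  rewrite /r (bigD1 t) //= lerDl sumr_ge0 // => k _.
  by apply: fpow_ge0; exact: Q_ge0.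
- exact: cvg_cst.
- by rewrite -(rl_zero s); exact: @r_cvg s.
Qed.

Lemma fpowSU_Q n s t : ~~ absorbing s -> ~~ absorbing t ->
  fpow SU n s t = fpow Q n s t.
Proof.
move=> Hs Ht; elim: n s Hs => [|n IH] s Hs //.
rewrite !fpowS !fmul_val; apply: eq_bigr => k _.
case Hk: (absorbing k).
  have Hkt : k != t by apply: contraNneq Ht => <-.
  by rewrite fpowSU_abs // (negbTE Hkt) /Q Hk andbF !mul0r mulr0.
by rewrite IH ?Hk // /Q Hs Hk.
Qed.

Definition Af (s t : st) : R := (s == t)%:R - Q s t.
Definition Am : 'M[R]_#|{: st}| := \matrix_(i, j) Af (enum_val i) (enum_val j).

Lemma sum_rank (F : 'I_#|{: st}| -> R) : \sum_i F i = \sum_(s : st) F (enum_rank s).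
Proof. by rewrite (reindex enum_rank) //; exact: onW_bij (enum_rank_bij _). Qed.

Lemma Am_rank s t : Am (enum_rank s) (enum_rank t) = Af s t.
Proof. by rewrite mxE !enum_rankK. Qed.

Lemma kernel_w (w : st -> R) : (forall t, \sum_s w s * Af s t = 0) -> forall s, w s = 0.
Proof.
move=> H.
have Hw : forall t, w t = \sum_s w s * Q s t.
  move=> t; have := H t; under eq_bigr do rewrite /Af mulrBr.
  by rewrite sumrB sum_delta_r => /eqP; rewrite subr_eq0 => /eqP.
have Hn : forall n t, w t = \sum_s w s * fpow Q n s t.
  elim=> [|n IH] t; first by rewrite /= /fid sum_delta_r.
  transitivity (\sum_k w k * fpow Q n k t); first exact: IH.
  under [RHS]eq_bigr do rewrite fpowS fmul_val mulr_sumr.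
  rewrite exchange_big /=; apply: eq_bigr => k _.
  rewrite {1}(Hw k) mulr_suml; apply: eq_bigr => s _; by rewrite mulrA.
move=> s.
have H1 : (fun n => \sum_s' w s' * fpow Q n s' s) @ \oo --> \sum_(s' : st) w s' * 0.
  apply: cvg_fsum => s'; apply: cvgMr; exact: Qpow_cvg0.
have H2 : (fun n => \sum_s' w s' * fpow Q n s' s) = (fun=> w s).
  by apply/funext => n; rewrite -Hn.
rewrite H2 big1 in H1; last by move=> k _; rewrite mulr0.
exact: (cvg_unique _ (cvg_cst (w s)) H1).
Qed.

Lemma Am_unit : Am \in unitmx.
Proof.
rewrite unitmxE unitfE; apply/negP => /det0P [v vn0 vA].
move/eqP: vn0; apply; apply/rowP => i; rewrite mxE.
pose w s := v 0 (enum_rank s).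
have Hw : forall s, w s = 0.
  apply: kernel_w => t.
  move/rowP: vA => /(_ (enum_rank t)); rewrite !mxE sum_rank => H; rewrite -[RHS]H.
  by apply: eq_bigr => s _; rewrite Am_rank.
by rewrite -(enum_valK i); exact: Hw.
Qed.

Definition N (s t : st) : R := invmx Am (enum_rank s) (enum_rank t).

Lemma rank_eq (s t : st) : (enum_rank s == enum_rank t) = (s == t).
Proof. exact: (inj_eq (bij_inj (enum_rank_bij _))). Qed.

Lemma N_left s t : \sum_k N s k * Af k t = (s == t)%:R.
Proof.
move/matrixP: (mulVmx Am_unit) => /(_ (enum_rank s) (enum_rank t)).
rewrite !mxE sum_rank rank_eq => <-.
by apply: eq_bigr => k _; rewrite Am_rank.
Qed.

Lemma N_right s t : \sum_k Af s k * N k t = (s == t)%:R.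
Proof.
move/matrixP: (mulmxV Am_unit) => /(_ (enum_rank s) (enum_rank t)).
rewrite !mxE sum_rank rank_eq => <-.
by apply: eq_bigr => k _; rewrite Am_rank.
Qed.

Definition y (t s : st) : R := \sum_(k | ~~ absorbing k) N s k * SU k t.
Definition z (t k : st) : R := if absorbing k then 0 else y t k.

Lemma sumQ_tr s (F : st -> R) :
  \sum_k Q s k * F k = \sum_(k | ~~ absorbing k) Q s k * F k.
Proof.
rewrite (bigID (@absorbing Pk)) /= big1 ?add0r // => k Hk.
by rewrite /Q Hk andbF mul0r.
Qed.

Lemma y_eq t s : ~~ absorbing s -> y t s = \sum_k Q s k * y t k + SU s t.
Proof.
move=> Hs.
have H : \sum_k Af s k * y t k = SU s t.
  rewrite /y; under eq_bigr do rewrite mulr_sumr.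
  rewrite exchange_big /=.
  transitivity (\sum_(j | ~~ absorbing j) (s == j)%:R * SU j t).
    apply: eq_bigr => j _; rewrite -N_right mulr_suml.
    by apply: eq_bigr => k _; rewrite mulrA.
  rewrite (bigD1 s) //= eqxx mul1r big1 ?addr0 // => j /andP [_ Hj].
  by rewrite eq_sym (negbTE Hj) mul0r.
move: H; rewrite /Af; under eq_bigr do rewrite mulrBl.
rewrite sumrB sum_delta_l => /eqP; rewrite subr_eq => /eqP ->.
by rewrite addrC.
Qed.

Lemma x_form t n s : absorbing t -> ~~ absorbing s ->
  fpow SU n s t = y t s - \sum_k fpow Q n s k * z t k.
Proof.
move=> Ht; elim: n s => [|n IH] s Hs.
  have Hst : (s == t) = false by apply/negP => /eqP Hst; move: Hs; rewrite Hst Ht.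
  by rewrite /= /fid sum_delta_l /z (negbTE Hs) subrr Hst.
rewrite fpowS fmul_val (bigID (@absorbing Pk)) /=.
have Ha : \sum_(k | absorbing k) SU s k * fpow SU n k t = SU s t.
  rewrite (bigD1 t) //= fpowSU_abs // eqxx mulr1 big1 ?addr0 // => k /andP [Hk Hkt].
  by rewrite fpowSU_abs // (negbTE Hkt) mulr0.
have Ht' : \sum_(k | ~~ absorbing k) SU s k * fpow SU n k t =
    \sum_(k | ~~ absorbing k) Q s k * (y t k - \sum_j fpow Q n k j * z t j).
  by apply: eq_bigr => k Hk; rewrite IH // /Q Hs Hk.
have Hr : \sum_j fpow Q n.+1 s j * z t j =
    \sum_(k | ~~ absorbing k) Q s k * (\sum_j fpow Q n k j * z t j).
  rewrite -sumQ_tr.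
  under eq_bigr do rewrite fpowS fmul_val mulr_suml.
  rewrite exchange_big /=; apply: eq_bigr => k _.
  by rewrite mulr_sumr; apply: eq_bigr => j _; rewrite mulrA.
rewrite Ha Ht' Hr (y_eq t Hs) sumQ_tr.
under [X in _ + X = _]eq_bigr do rewrite mulrBr.
rewrite sumrB.
set a := \sum_(i | _) Q s i * y t i.
set b := \sum_(i | _) Q s i * _.
by rewrite addrA [SU s t + a]addrC.
Qed.

Lemma x_cvg t s : absorbing t -> ~~ absorbing s ->
  (fun n => fpow SU n s t) @ \oo --> y t s.
Proof.
move=> Ht Hs.
have H : (fun n => \sum_k fpow Q n s k * z t k) @ \oo --> \sum_(k : st) 0 * z t k.
  by apply: cvg_fsum => k; apply: cvgMl; exact: Qpow_cvg0.
rewrite big1 in H; last by move=> k _; rewrite mul0r.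
have -> : (fun n => fpow SU n s t) =
    (fun=> y t s) - (fun n => \sum_k fpow Q n s k * z t k).
  by apply/funext => n; rewrite x_form.
rewrite -[X in _ --> X]subr0.
by apply: cvgB => //; exact: cvg_cst.
Qed.

Definition L (s t : st) : R :=
  if absorbing s then (s == t)%:R else if absorbing t then y t s else 0.

Lemma L_cvg s t : (fun n => fpow SU n s t) @ \oo --> L s t.
Proof.
rewrite /L; case: ifP => Hs.
  have -> : (fun n => fpow SU n s t) = (fun=> (s == t)%:R).
    by apply/funext => n; rewrite fpowSU_abs.
  exact: cvg_cst.
case: ifP => Ht; first by apply: x_cvg => //; rewrite Hs.
have -> : (fun n => fpow SU n s t) = (fun n => fpow Q n s t).
  by apply/funext => n; rewrite fpowSU_Q ?Hs ?Ht.
exact: Qpow_cvg0.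
Qed.

Lemma SUinf_L s t : SUinf B s t = L s t.
Proof. exact: (cvg_lim (@Rhausdorff R) (@L_cvg s t)). Qed.

Definition h c n (k : st) := \sum_(a' : {set Pk}) fpow SU n k (a', c).

Lemma hS c n s : h c n.+1 s = \sum_k SU s k * h c n k.
Proof.
rewrite /h; under eq_bigr do rewrite fpowS fmul_val.
rewrite exchange_big; apply: eq_bigr => k _; by rewrite mulr_sumr.
Qed.

Lemma h0 c k : h c 0 k = (k.2 == c)%:R.
Proof.
rewrite /h /= /fid; case: k => a b /=.
rewrite (bigD1 a) //= xpair_eqE eqxx /= big1 ?addr0 // => a' Ha'.
by rewrite xpair_eqE eq_sym (negbTE Ha').
Qed.

Lemma hS_sat c n j : saturated B j -> h c n.+1 j = h c n (finset.set0, j.2).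
Proof.
move=> Hj; rewrite hS.
transitivity (\sum_k ((finset.set0, j.2) == k)%:R * h c n k).
  by apply: eq_bigr => k _; rewrite SU_sat // eq_sym.
by rewrite sum_delta_l.
Qed.

Lemma h_pi c n k : h c n (pi k) = h c n k.
Proof.
rewrite /pi; case: ifP => Hk //; move/asboolP: Hk => Hk.
case: n => [|n]; first by rewrite !h0.
by rewrite (hS_sat c n (@sat0 k.2)) (hS_sat c n Hk).
Qed.

Lemma hS' c n s : h c n.+1 s = \sum_j S s j * h c n j.
Proof.
rewrite hS; under eq_bigr do rewrite SU_val mulr_suml.
rewrite exchange_big /=; apply: eq_bigr => j _.
transitivity (S s j * \sum_k (pi j == k)%:R * h c n k).
  by rewrite mulr_sumr; apply: eq_bigr => k _; rewrite mulrA eq_sym.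
by rewrite sum_delta_l h_pi.
Qed.

Lemma h_S c n s : h c n s = \sum_(a' : {set Pk}) fpow S n s (a', c).
Proof.
elim: n s => [|n IH] s; first by [].
rewrite hS'; under eq_bigr do rewrite IH.
rewrite [RHS](eq_bigr (fun a' => \sum_j S s j * fpow S n j (a', c))); last first.
  by move=> a' _; rewrite fpowS fmul_val.
rewrite exchange_big /=; apply: eq_bigr => j _; by rewrite mulr_sumr.
Qed.

Lemma L_col s c a' : a' != finset.set0 -> L s (a', c) = 0.
Proof.
move=> Ha; rewrite /L; case: ifP => Hs.
  case: eqP => // Heq; move: Hs; rewrite Heq /absorbing /= (negbTE Ha) //.
by rewrite /absorbing /= (negbTE Ha).
Qed.

Lemma conj2 a b b' :
  (fun n : nat => (\sum_(a' : {set Pk}) fpow S n (a, b) (a', b') : R)) @ \oo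
       --> SUinf B (a, b) (finset.set0, b').
Proof.
have -> : (fun n : nat => (\sum_(a' : {set Pk}) fpow S n (a, b) (a', b') : R)) =
   (fun n => \sum_(a' : {set Pk}) fpow SU n (a, b) (a', b')).
  by apply/funext => n; rewrite -h_S.
rewrite SUinf_L.
have -> : L (a, b) (finset.set0, b') = \sum_(a' : {set Pk}) L (a, b) (a', b').
  by rewrite (bigD1 finset.set0) //= big1 ?addr0 // => a' Ha; rewrite L_col.
apply: cvg_fsum => a'; exact: L_cvg.
Qed.

Hypothesis B_rat : forall a a', exists q : rat, B a a' = ratr q.

Definition isr (x : R) := exists q : rat, x = ratr q.

Lemma isr_nat n : isr n%:R.
Proof. by exists n%:R; rewrite ratr_nat. Qed.

Lemma isrD x y : isr x -> isr y -> isr (x + y).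
Proof. by move=> [p ->] [q ->]; exists (p + q); rewrite rmorphD. Qed.

Lemma isrB x y : isr x -> isr y -> isr (x - y).
Proof. by move=> [p ->] [q ->]; exists (p - q); rewrite rmorphB. Qed.

Lemma isrM x y : isr x -> isr y -> isr (x * y).
Proof. by move=> [p ->] [q ->]; exists (p * q); rewrite rmorphM. Qed.

Lemma isr0 : isr 0.
Proof. by exists 0; rewrite rmorph0. Qed.

Lemma isr_sum (I : finType) (P : pred I) (F : I -> R) :
  (forall i, isr (F i)) -> isr (\sum_(i | P i) F i).
Proof.
move=> H; apply: big_ind; [exact: isr0 | exact: isrD | move=> i _; exact: H].
Qed.

Lemma isr_S s t : isr (S s t).
Proof. by rewrite /smallstep; apply: isrM; [exact: isr_nat | exact: B_rat]. Qed.

Lemma isr_SU s t : isr (SU s t).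
Proof.
rewrite fmul_val; apply: isr_sum => k; apply: isrM; first exact: isr_S.
by rewrite Uval; exact: isr_nat.
Qed.

Lemma isr_Q s t : isr (Q s t).
Proof. by rewrite /Q; case: ifP => _; [exact: isr_SU | exact: isr0]. Qed.

Lemma isr_Af s t : isr (Af s t).
Proof. by apply: isrB; [exact: isr_nat | exact: isr_Q]. Qed.

Lemma isr_N s t : isr (N s t).
Proof.
have Hf : forall ij : 'I_#|{: st}| * 'I_#|{: st}|, exists q : rat, Am ij.1 ij.2 = ratr q.
  by move=> [i j]; rewrite mxE; exact: isr_Af.
have [f Hf'] := boolp.choice Hf.
pose Aq : 'M[rat]_#|{: st}| := \matrix_(i, j) f (i, j).
have HA : Am = map_mx ratr Aq.
  by apply/matrixP => i j; rewrite (Hf' (i, j)) !mxE.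
exists (invmx Aq (enum_rank s) (enum_rank t)).
by rewrite /N HA -map_invmx mxE.
Qed.

Lemma isr_L s t : isr (L s t).
Proof.
rewrite /L; case: ifP => _; first exact: isr_nat.
case: ifP => _; last exact: isr0.
rewrite /y; apply: isr_sum => k; apply: isrM; [exact: isr_N | exact: isr_SU].
Qed.

Lemma main :
  (forall s t : st, (fun n : nat => (fpow SU n s t : R)) @ \oo --> SUinf B s t) /\
  (forall a b b' : {set Pk},
     (fun n : nat => (\sum_(a' : {set Pk}) fpow S n (a, b) (a', b') : R)) @ \oo
       --> SUinf B (a, b) (finset.set0, b')) /\
  (forall s t : st, absorbing s -> SU s t = (s == t)%:R) /\
  (exists N : st -> st -> R,
     (forall s t : st, ~~ absorbing s -> ~~ absorbing t ->
        \sum_(k : st | ~~ absorbing k) N s k * ((k == t)%:R - SU k t)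
          = (s == t)%:R) /\
     (forall s t : st, ~~ absorbing s -> ~~ absorbing t ->
        \sum_(k : st | ~~ absorbing k) ((s == k)%:R - SU s k) * N k t
          = (s == t)%:R) /\
     (forall s t : st,
        SUinf B s t =
          if absorbing s then (s == t)%:R
          else if absorbing t then
                 \sum_(k : st | ~~ absorbing k) N s k * SU k t
               else 0)) /\
  (forall s t : st, exists q : rat, SUinf B s t = ratr q).
Proof.
split; first by move=> s t; rewrite SUinf_L; exact: L_cvg.
split; first exact: conj2.
split; first by move=> s t Hs; exact: SU_abs.
split; last by move=> s t; rewrite SUinf_L; exact: isr_L.
exists N; split; [|split].
- move=> s t Hs Ht.
  rewrite -(N_left s t) [RHS](bigID (@absorbing Pk)) /=.
  rewrite [X in _ = X + _]big1 ?add0r; last first.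
    move=> k Hk; have Hkt : (k == t) = false.
      by apply/negP => /eqP Hkt; move: Ht; rewrite -Hkt Hk.
    by rewrite /Af /Q Hk Hkt /= subr0 mulr0.
  by apply: eq_bigr => k Hk; rewrite /Af /Q Hk Ht.
- move=> s t Hs Ht.
  rewrite -(N_right s t) [RHS](bigID (@absorbing Pk)) /=.
  rewrite [X in _ = X + _]big1 ?add0r; last first.
    move=> k Hk; have Hkt : (s == k) = false.
      by apply/negP => /eqP Hkt; move: Hs; rewrite Hkt Hk.
    by rewrite /Af /Q Hk Hkt andbF /= subr0 mul0r.
  by apply: eq_bigr => k Hk; rewrite /Af /Q Hk Hs.
- by move=> s t; rewrite SUinf_L.
Qed.

End Chain2.

Theorem theorem4p7 (Pk : finType) (R : realType)
  (B : {set Pk} -> {set Pk} -> R)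
  (B_ge0 : forall a a', 0 <= B a a')
  (B_stoch : forall a, \sum_(a' : {set Pk}) B a a' = 1)
  (B_rat : forall a a', exists q : rat, B a a' = ratr q)
  (B_empty : B finset.set0 finset.set0 = 1) :
  let S := smallstep B in
  let SU := fmul S (Umx B) in
  (* (SU)^n converges entrywise to (SU)^∞ *)
  (forall s t : state Pk, (fun n : nat => (fpow SU n s t : R)) @ \oo --> SUinf B s t) /\
  (* main identity, including existence of the left-hand limit *)
  (forall a b b' : {set Pk},
     (fun n : nat => (\sum_(a' : {set Pk}) fpow S n (a, b) (a', b') : R)) @ \oo
       --> SUinf B (a, b) (finset.set0, b')) /\
  (* block form SU = [I 0; R Q] with absorbing states (∅,c) *)
  (forall s t : state Pk, absorbing s -> SU s t = (s == t)%:R) /\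
  (* closed form: I - Q is invertible with inverse N, and
     (SU)^∞ = [I 0; N R 0] *)
  (exists N : state Pk -> state Pk -> R,
     (forall s t : state Pk, ~~ absorbing s -> ~~ absorbing t ->
        \sum_(k : state Pk | ~~ absorbing k) N s k * ((k == t)%:R - SU k t)
          = (s == t)%:R) /\
     (forall s t : state Pk, ~~ absorbing s -> ~~ absorbing t ->
        \sum_(k : state Pk | ~~ absorbing k) ((s == k)%:R - SU s k) * N k t
          = (s == t)%:R) /\
     (forall s t : state Pk,
        SUinf B s t =
          if absorbing s then (s == t)%:R
          else if absorbing t then
                 \sum_(k : state Pk | ~~ absorbing k) N s k * SU k t
               else 0)) /\
  (* rational entries *)
  (forall s t : state Pk, exists q : rat, SUinf B s t = ratr q).
Proof.
move=> S SU.
by apply: main.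
Qed.
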